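(* Let $t\ge 2$ and let $G$ be a graph of order $n$ with vertex degrees $d_1,\ldots,d_n$. Let $\overline{q}_1,\ldots,\overline{q}_n$ be the eigenvalues of the signless Laplacian of the complement $\overline{G}$. Then the eigenvalues of the signless Laplacian of $\overline{G^{(t)}}$ (the complement of the blowup $G^{(t)}$) are, as a multiset, $t\overline{q}_1+2(t-1),\ldots,t\overline{q}_n+2(t-1)$ together with $tn-td_1-2,\ldots,tn-td_n-2$, where each of $tn-td_1-2,\ldots,tn-td_n-2$ is taken with multiplicity $t-1$.
   Context: Graphs are finite and simple; $\overline{H}$ denotes the complement of a graph $H$. The signless Laplacian of a graph with adjacency matrix $A$ and diagonal degree matrix $D$ is $Q=D+A$. For an integer $t\ge1$, the blowup $G^{(t)}$ is obtained from $G$ by replacing each vertex $u$ by a set $V_u$ of $t$ pairwise nonadjacent vertices and each edge $\{u,v\}$ of $G$ by the complete bipartite graph between $V_u$ and $V_v$ (and no other edges). *)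

(* Defs.v *)
From HB Require Import structures.
From mathcomp Require Import all_boot all_order all_algebra.
Set Implicit Arguments. Unset Strict Implicit. Unset Printing Implicit Defensive.
Import Order.TTheory GRing.Theory Num.Theory.
Local Open Scope ring_scope.

Definition simple_graph (V : finType) (e : rel V) : Prop :=
  symmetric e /\ irreflexive e.

Definition deg (V : finType) (e : rel V) (x : V) : nat := #|[set y | e x y]|.

Definition compl_graph (V : finType) (e : rel V) : rel V :=
  fun x y => (x != y) && ~~ e x y.

(* blowup G^(t): vertex u replaced by V_u = {u} x 'I_t (independent set),
   (u,a) ~ (v,b) iff u ~ v in G. *)
Definition blowup (V : finType) (e : rel V) (t : nat) : rel (V * 'I_t)%type :=
  fun x y => e x.1 y.1.

Definition signless_laplacian (R : numDomainType) (V : finType) (e : rel V)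
  : 'M[R]_#|V| :=
  \matrix_(i, j)
    ((if i == j then (deg e (enum_val i))%:R else 0)
     + (e (enum_val i) (enum_val j))%:R).

Definition eigenvalues_multiset (R : comNzRingType) (m : nat)
  (A : 'M[R]_m) (s : seq R) : Prop :=
  char_poly A = \prod_(x <- s) ('X - x%:P).

(* Main.v *)
Require Import Defs.
From HB Require Import structures.
From mathcomp Require Import all_boot all_order all_algebra perm fingroup ring.
Set Implicit Arguments. Unset Strict Implicit. Unset Printing Implicit Defensive.
Import Order.TTheory GRing.Theory Num.Theory.
Local Open Scope ring_scope.

Lemma cp_sim (R : comNzRingType) n (P A Q : 'M[R]_n) :
  P *m Q = 1%:M -> char_poly (P *m A *m Q) = char_poly A.
Proof.
move=> PQ; rewrite /char_poly.
have -> : char_poly_mx (P *m A *m Q)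
    = map_mx polyC P *m char_poly_mx A *m map_mx polyC Q.
  rewrite /char_poly_mx mulmxBr mulmxBl -!map_mxM; congr (_ - _).
  by rewrite mul_mx_scalar -scalemxAl -map_mxM PQ map_mx1 scalemx1.
by rewrite !det_mulmx mulrAC -det_mulmx -map_mxM PQ map_mx1 det1 mul1r.
Qed.

Lemma cp_reindex (R : comNzRingType) m n (A : 'M[R]_m) (B : 'M[R]_n)
  (f : 'I_n -> 'I_m) : injective f -> m = n ->
  (forall i j, B i j = A (f i) (f j)) -> char_poly B = char_poly A.
Proof.
move=> finj emn; subst m => BE.
pose s : 'S_n := perm finj.
have -> : B = perm_mx s *m A *m perm_mx s^-1.
  by apply/matrixP => i j; rewrite -row_permE -col_permE !mxE BE !permE.
by apply: cp_sim; rewrite -perm_mxM mulgV perm_mx1.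
Qed.

Definition mxof (R : nzRingType) (I : finType) (a : I -> I -> R) : 'M[R]_#|I| :=
  \matrix_(i, j) a (enum_val i) (enum_val j).

Lemma sum_enum (R : nzRingType) (I : finType) (F : I -> R) :
  \sum_(k < #|I|) F (enum_val k) = \sum_z F z.
Proof.
by rewrite (reindex (@enum_val I predT)) //=; apply: onW_bij; apply: enum_val_bij.
Qed.

Lemma mxof_mul (R : nzRingType) (I : finType) (a b : I -> I -> R) :
  mxof (fun x y => \sum_z a x z * b z y) = mxof a *m mxof b.
Proof.
apply/matrixP => i j; rewrite !mxE -sum_enum; apply: eq_bigr => k _.
by rewrite !mxE.
Qed.

Lemma mxof1 (R : nzRingType) (I : finType) :
  mxof (fun x y : I => (x == y)%:R) = 1%:M :> 'M[R]_#|I|.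
Proof. by apply/matrixP => i j; rewrite !mxE (inj_eq enum_val_inj). Qed.

Lemma cp_reindexf (R : comNzRingType) (I J : finType) (a : I -> I -> R)
  (g : J -> I) : bijective g ->
  char_poly (mxof (fun x y => a (g x) (g y))) = char_poly (mxof a).
Proof.
move=> gb; apply: (@cp_reindex _ _ _ _ _ (fun k => enum_rank (g (enum_val k)))).
- move=> k l /enum_rank_inj /(bij_inj gb) /enum_val_inj //.
- by rewrite (bij_eq_card gb).
- by move=> i j; rewrite !mxE !enum_rankK.
Qed.

Lemma cp_simf (R : comNzRingType) (I : finType) (A P Pi : I -> I -> R) :
  (forall x y, \sum_z Pi x z * P z y = (x == y)%:R) ->
  char_poly (mxof (fun x y => \sum_z Pi x z * \sum_w A z w * P w y))
  = char_poly (mxof A).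
Proof.
move=> PiP.
rewrite (mxof_mul Pi (fun z y => \sum_w A z w * P w y)) mxof_mul mulmxA.
apply: cp_sim; rewrite -mxof_mul -mxof1.
by apply/matrixP => i j; rewrite !mxE PiP.
Qed.

Lemma cp_block_mx (R : comNzRingType) m n (A : 'M[R]_m) B (D : 'M[R]_n) :
  char_poly (block_mx A B 0 D) = char_poly A * char_poly D.
Proof.
rewrite /char_poly /char_poly_mx map_block_mx (scalar_mx_block m n) raddf0.
by rewrite opp_block_mx add_block_mx oppr0 addr0 det_ublock.
Qed.

Lemma cp_block (R : comNzRingType) (I J : finType) (a : I + J -> I + J -> R) :
  (forall j i, a (inr j) (inl i) = 0) ->
  char_poly (mxof a) = char_poly (mxof (fun x y => a (inl x) (inl y)))
                     * char_poly (mxof (fun x y => a (inr x) (inr y))).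
Proof.
move=> a0.
pose f (k : 'I_(#|I| + #|J|)) : I + J :=
  match split k with inl i => inl (enum_val i) | inr j => inr (enum_val j) end.
pose g (x : I + J) : 'I_(#|I| + #|J|) :=
  match x with inl i => lshift _ (enum_rank i) | inr j => rshift _ (enum_rank j) end.
have fK : cancel f g.
  move=> k; rewrite /f -{2}[k]splitK; case: (split k) => i /=; by rewrite enum_valK.
pose Bur : 'M[R]_(#|I|, #|J|) := \matrix_(i, j) a (inl (enum_val i)) (inr (enum_val j)).
rewrite -(cp_block_mx _ Bur).
symmetry; apply: (@cp_reindex _ _ _ _ _ (fun k => enum_rank (f k))).
- by move=> k l /enum_rank_inj /(can_inj fK).
- by rewrite card_sum.
have sl (k : 'I_#|I|) : split (lshift #|J| k) = inl k by exact: (unsplitK (inl k)).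
have sr (k : 'I_#|J|) : split (rshift #|I| k) = inr k by exact: (unsplitK (inr k)).
move=> i j; rewrite -[i]splitK -[j]splitK.
case: (split i) => i'; case: (split j) => j' /=;
 rewrite ?block_mxEul ?block_mxEur ?block_mxEdl ?block_mxEdr !mxE !enum_rankK /f
   ?sl ?sr //= ?a0.
Qed.

Lemma cp_diag (R : comNzRingType) (I : finType) (d : I -> R) :
  char_poly (mxof (fun x y => (x == y)%:R * d x)) = \prod_x ('X - (d x)%:P).
Proof.
rewrite char_poly_trig.
  rewrite (reindex (@enum_val I predT)) /=; last first.
    by apply: onW_bij; apply: enum_val_bij.
  by apply: eq_bigr => i _; rewrite !mxE eqxx mul1r.
apply/is_trig_mxP => i j lt; rewrite !mxE (inj_eq enum_val_inj).
by rewrite -val_eqE /= (ltn_eqF lt) mul0r.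
Qed.

Lemma prod_scale (R : comNzRingType) (s : seq R) (c : R) (F : R -> {poly R}) :
  c%:P ^+ size s * \prod_(q <- s) F q = \prod_(q <- s) (c%:P * F q).
Proof.
elim: s => [|q s IH]; first by rewrite !big_nil mulr1.
by rewrite !big_cons /= exprS -IH; ring.
Qed.

Lemma cp_scale (R : fieldType) n (M : 'M[R]_n) (s : seq R) (c d : R) :
  c != 0 -> char_poly M = \prod_(q <- s) ('X - q%:P) ->
  char_poly (c *: M + d%:M) = \prod_(q <- s) ('X - (c * q + d)%:P).
Proof.
move=> c0 cM.
have hs : size s = n.
  by have := size_char_poly M; rewrite cM size_prod_XsubC => -[].
pose p := c^-1%:P * ('X - d%:P).
have E : char_poly_mx (c *: M + d%:M)
    = c%:P *: map_mx (comp_poly p) (char_poly_mx M).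
  apply/matrixP => i j; rewrite !mxE.
  case: (i == j) => /=; rewrite ?mulr1n ?mulr0n ?comp_polyB ?comp_polyX
     ?comp_polyC ?comp_poly0 ?polyCD ?polyCM /p ?addr0 ?sub0r;
  rewrite ?mulrBr ?mulrN ?mulrA -?polyCM ?divff // ?mul1r; ring.
rewrite /char_poly E detZ det_map_mx /= -/(char_poly M) cM rmorph_prod /=.
rewrite -hs prod_scale; apply: eq_bigr => q _.
rewrite comp_polyB comp_polyX comp_polyC /p mulrBr mulrA -polyCM divff // mul1r.
rewrite polyCD polyCM; ring.
Qed.

Lemma card_natr (R : nzRingType) (T : finType) (P : pred T) :
  (#|[set y | P y]|%:R : R) = \sum_y (P y)%:R.
Proof.
rewrite -sum1_card natr_sum big_mkcond /=.
by apply: eq_bigr => y _; rewrite inE; case: (P y).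
Qed.

Lemma sum_pred1 (R : nzRingType) (T : finType) (x : T) (F : T -> R) :
  \sum_z (z == x)%:R * F z = F x.
Proof.
rewrite (bigD1 x) //= eqxx mul1r big1 ?addr0 // => z /negbTE ->.
by rewrite mul0r.
Qed.

Lemma sum_pred1r (R : nzRingType) (T : finType) (x : T) (F : T -> R) :
  \sum_z F z * (z == x)%:R = F x.
Proof.
rewrite (bigD1 x) //= eqxx mulr1 big1 ?addr0 // => z /negbTE ->.
by rewrite mulr0.
Qed.

Lemma sum_neq' (R : nzRingType) (T : finType) (x : T) (P : pred T) :
  \sum_z ((x != z) && P z)%:R = \sum_z (P z)%:R - (P x)%:R :> R.
Proof.
rewrite [in RHS](bigD1 x) //= addrAC subrr add0r [in RHS]big_mkcond /=.
apply: eq_bigr => z _; rewrite eq_sym; by case: (z != x); case: (P z).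
Qed.

Lemma sum_negb (R : nzRingType) (T : finType) (P : pred T) :
  \sum_z (~~ P z)%:R = #|T|%:R - \sum_z (P z)%:R :> R.
Proof.
have -> : (#|T|%:R : R) = \sum_(z : T) 1 by rewrite sumr_const.
rewrite -sumrB; apply: eq_bigr => z _.
by case: (P z); rewrite ?subrr ?subr0.
Qed.

Definition Qf (R : nzRingType) (V : finType) (e : rel V) (x y : V) : R :=
  (if x == y then (deg e x)%:R else 0) + (e x y)%:R.

Lemma sl_mxof (R : numDomainType) (V : finType) (e : rel V) :
  signless_laplacian R e = mxof (Qf R e).
Proof.
apply/matrixP => i j; rewrite !mxE /Qf; congr (_ + _).
by case: eqP => [->|ne]; [rewrite eqxx | case: eqP => // /enum_val_inj].
Qed.

Lemma deg_natr (R : nzRingType) (V : finType) (e : rel V) x :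
  (deg e x)%:R = \sum_y (e x y)%:R :> R.
Proof. exact: card_natr. Qed.

Lemma deg_compl (R : nzRingType) (V : finType) (e : rel V) x :
  irreflexive e ->
  (deg (compl_graph e) x)%:R = #|V|%:R - (deg e x)%:R - 1 :> R.
Proof.
move=> irr; rewrite deg_natr /compl_graph.
have := sum_neq' R x (fun z => ~~ e x z) => /= ->.
by rewrite sum_negb -deg_natr irr.
Qed.

Lemma deg_blow (R : nzRingType) (V : finType) (e : rel V) k (v : V)
  (a : 'I_k.+1) : irreflexive e ->
  (deg (compl_graph (@blowup V e k.+1)) (v, a))%:R
    = k.+1%:R * (#|V|%:R - (deg e v)%:R) - 1 :> R.
Proof.
move=> irr; rewrite deg_natr /compl_graph /blowup /=.
have := sum_neq' R (v, a) (fun p : V * 'I_k.+1 => ~~ e v p.1) => /= ->.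
rewrite irr; congr (_ - _).
rewrite -(pair_bigA _ (fun w (b : 'I_k.+1) => (~~ e v w)%:R)) /=.
under eq_bigr => w _ do rewrite sumr_const card_ord.
by rewrite sumrMnl sum_negb -deg_natr mulr_natl.
Qed.

Section S.
Variables (R : nzRingType) (V : finType) (e : rel V) (k : nat).
Hypothesis irr : irreflexive e.
Local Notation I := (V * 'I_k.+1)%type.
Local Notation o := (@ord0 k).

Definition Ab (x y : I) : R := Qf R (compl_graph (@blowup V e k.+1)) x y.
Definition Pm (z y : I) : R :=
  if y.2 == o then (z.1 == y.1)%:R else (z == y)%:R.
Definition Pim (x z : I) : R :=
  (z == x)%:R - (x.2 != o)%:R * (z == (x.1, o))%:R.
Definition Cm (z y : I) : R := \sum_w Ab z w * Pm w y.

Lemma PiP x y : \sum_z Pim x z * Pm z y = (x == y)%:R.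
Proof.
rewrite /Pim; under eq_bigr => z _ do rewrite mulrBl -mulrA.
rewrite sumrB sum_pred1 -mulr_sumr sum_pred1.
case: x y => [v a] [w c]; rewrite /Pm /=.
case: eqP => [->|cn].
  rewrite !xpair_eqE.
  by case: (v == w); case: (a == o);
    rewrite /= ?mulr1n ?mulr0n ?mul1r ?mul0r ?subrr ?subr0.
case: (@eqP _ (v, o) (w, c)) => [[_ oc]|_]; first by case: cn.
by rewrite mulr0 subr0.
Qed.

Lemma B_eq x y :
  \sum_z Pim x z * Cm z y = Cm x y - (x.2 != o)%:R * Cm (x.1, o) y.
Proof.
rewrite /Pim; under eq_bigr => z _ do rewrite mulrBl -mulrA.
by rewrite sumrB sum_pred1 -mulr_sumr sum_pred1.
Qed.

Lemma C_ne z y : y.2 != o -> Cm z y = Ab z y.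
Proof.
move=> yn; rewrite /Cm /Pm (negbTE yn); exact: sum_pred1r.
Qed.

Definition Dv (v : V) : R := k.+1%:R * (#|V|%:R - (deg e v)%:R) - 1.

Lemma Ab_eq (x y : I) :
  Ab x y = (x == y)%:R * Dv x.1 + ((x != y) && ~~ e x.1 y.1)%:R.
Proof.
rewrite /Ab /Qf /compl_graph /blowup /=; case: x => v a /=.
by rewrite deg_blow //; case: eqP => _; rewrite ?mul1r ?mul0r.
Qed.

Lemma C_o z y : y.2 = o ->
  Cm z y = (z.1 == y.1)%:R * Dv z.1 + k.+1%:R * (~~ e z.1 y.1)%:R
           - (z.1 == y.1)%:R.
Proof.
move=> yo; rewrite /Cm /Pm yo eqxx.
under eq_bigr => w _ do rewrite Ab_eq mulrDl.
rewrite big_split /=; rewrite -addrA; congr (_ + _).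
  under eq_bigr => w _ do rewrite eq_sym -mulrA.
  by rewrite sum_pred1; case: (z.1 == y.1); rewrite ?mul1r ?mulr1 ?mul0r ?mulr0.
rewrite (eq_bigr (fun w : I => ((z != w) && (~~ e z.1 w.1 && (w.1 == y.1)))%:R)); last first.
  by move => w _; case: (z != w); case: (e _ _); case: (_ == _);
    rewrite /= ?mulr1 ?mulr0.
have := sum_neq' R z (fun w : I => ~~ e z.1 w.1 && (w.1 == y.1)) => /= ->.
rewrite irr /=; congr (_ - _).
rewrite -(pair_bigA _ (fun u (b : 'I_k.+1) => (~~ e z.1 u && (u == y.1))%:R)) /=.
under eq_bigr => u _ do rewrite sumr_const card_ord.
rewrite sumrMnl.
rewrite (eq_bigr (fun u => (u == y.1)%:R * (~~ e z.1 u)%:R)); last first.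
  by move => u _; case: (e _ _); case: (_ == _);
    rewrite /= ?mulr1 ?mulr0 ?mul1r ?mul0r.
by rewrite sum_pred1 mulr_natl.
Qed.

End S.

Section M.
Variables (R : rcfType) (V : finType) (e : rel V) (k : nat).
Hypothesis irr : irreflexive e.
Local Notation I := (V * 'I_k.+1)%type.
Local Notation o := (@ord0 k).

Definition Bf (x y : I) : R := \sum_z @Pim R V k x z * @Cm R V e k z y.

Definition hh (x : V + 'I_k * V) : I :=
  match x with inl v => (v, o) | inr p => (p.2, lift o p.1) end.
Definition hi (p : I) : V + 'I_k * V :=
  match unlift o p.2 with Some b => inr (b, p.1) | None => inl p.1 end.

Lemma hh_bij : bijective hh.
Proof.
exists hi.
  by case=> [v|[b v]]; rewrite /hi /= ?unlift_none ?liftK.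
by case=> v a; rewrite /hi /=; case: unliftP => [b ->|->].
Qed.

Lemma BL_eq v w : Bf (v, o) (w, o)
  = k.+1%:R * Qf R (compl_graph e) v w + (2 * (k.+1%:R - 1)) * (v == w)%:R.
Proof.
rewrite /Bf B_eq /= mul0r subr0 C_o //= /Qf deg_compl // /compl_graph /Dv.
case: (eqVneq v w) => [<-|ne]; first by rewrite irr /= ?mulr1n; ring.
by rewrite /= ?mulr0n; ring.
Qed.

Lemma BZ_eq b v w : Bf (v, lift o b) (w, o) = 0.
Proof.
rewrite /Bf B_eq /= (@C_o R V e k irr (v, lift o b)) // (@C_o R V e k irr (v, o)) //=.
by rewrite mul1r subrr.
Qed.

Lemma BR_eq b v c w : Bf (v, lift o b) (w, lift o c)
  = ((b, v) == (c, w))%:R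
    * (k.+1%:R * #|V|%:R - k.+1%:R * (deg e v)%:R - 2).
Proof.
have t1 : (true%:R : R) = 1 by [].
have f0 : (false%:R : R) = 0 by [].
have ln (d : 'I_k) : (lift o d != o) by rewrite eq_sym neq_lift.
rewrite /Bf B_eq /= ?mul1r !C_ne ?ln // !(Ab_eq _ irr) /= /Dv.
case: (eqVneq v w) => [<-|ne].
  rewrite irr !xpair_eqE eqxx /= (inj_eq lift_inj) ?andbT.
  case: (b == c); rewrite /= ?t1 ?f0; ring.
rewrite !xpair_eqE (negbTE ne) /= andbF ?t1 ?f0; ring.
Qed.

End M.

Lemma prod_nseq (R : comNzRingType) k (a : R) (F : R -> {poly R}) :
  \prod_(x <- nseq k a) F x = F a ^+ k.
Proof.
by elim: k => [|k IH]; rewrite ?big_nil ?expr0 //= big_cons IH exprS.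
Qed.

Lemma main_k (R : rcfType) (V : finType) (e : rel V) (k : nat) (qbar : seq R) :
  simple_graph e ->
  eigenvalues_multiset (signless_laplacian R (compl_graph e)) qbar ->
  eigenvalues_multiset (signless_laplacian R (compl_graph (@blowup V e k.+1)))
    ([seq k.+1%:R * q + 2 * (k.+1%:R - 1) | q <- qbar] ++
     flatten [seq nseq k (k.+1%:R * #|V|%:R - k.+1%:R * (deg e v)%:R - 2)
             | v <- enum V]).
Proof.
move=> [_ irr]; rewrite /eigenvalues_multiset !sl_mxof => hq.
rewrite -[mxof (Qf R _)]/(mxof (@Ab R V e k)).
rewrite -(@cp_simf R _ (@Ab R V e k) (@Pm R V k) (@Pim R V k) (@PiP R V k)).
rewrite -[mxof (fun x y => _)]/(mxof (@Bf R V e k)).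
rewrite -(@cp_reindexf R _ _ (@Bf R V e k) (@hh V k) (@hh_bij V k)).
rewrite cp_block /=; last by move=> [b v] w; exact: BZ_eq.
rewrite big_cat /=; congr (_ * _).
  rewrite big_map.
  have -> : mxof (fun x y : V => @Bf R V e k (@hh V k (inl x)) (@hh V k (inl y)))
     = k.+1%:R *: mxof (Qf R (compl_graph e)) + (2 * (k.+1%:R - 1))%:M.
    apply/matrixP => i j; rewrite !mxE /= BL_eq // mulr_natr.
    by rewrite (inj_eq enum_val_inj).
  by apply: cp_scale => //; rewrite pnatr_eq0.
have -> : mxof (fun x y => @Bf R V e k (@hh V k (inr x)) (@hh V k (inr y)))
   = mxof (fun x y : 'I_k * V => (x == y)%:R *
       (k.+1%:R * #|V|%:R - k.+1%:R * (deg e x.2)%:R - 2 : R)).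
  apply/matrixP => i j; rewrite !mxE.
  case: (enum_val i) => b v; case: (enum_val j) => c w /=.
  exact: BR_eq.
rewrite cp_diag big_flatten big_map /=.
under [in RHS]eq_bigr => v _ do rewrite prod_nseq.
rewrite prodrXl big_enum /=.
rewrite -(pair_bigA _ (fun (b : 'I_k) v =>
   ('X - (k.+1%:R * #|V|%:R - k.+1%:R * (deg e v)%:R - 2 : R)%:P))) /=.
by rewrite prodr_const card_ord.
Qed.

Theorem theorem10 (R : rcfType) (V : finType) (e : rel V) (t : nat)
  (qbar : seq R) :
  (2 <= t)%N ->
  simple_graph e ->
  eigenvalues_multiset (signless_laplacian R (compl_graph e)) qbar ->
  eigenvalues_multiset (signless_laplacian R (compl_graph (@blowup V e t)))
    ([seq t%:R * q + 2 * (t%:R - 1) | q <- qbar] ++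
     flatten [seq nseq t.-1 (t%:R * #|V|%:R - t%:R * (deg e v)%:R - 2)
             | v <- enum V]).
Proof. by case: t => [//|k] _; apply: main_k. Qed.
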